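(* Let $\phi(z)\equiv\forall x_1\exists y_1\forall x_2\cdots\forall x_r\exists y_r\,\chi(z,x_1,\dots,x_r,y_1,\dots,y_r)$ be a positive formula in the language of groups, where $\chi$ is a positive quantifier-free formula. Then there are a system of equations $\Sigma=1$ and a positive formula $\theta(z,u,v)\equiv\forall x_1\exists y_1\forall x_2\cdots\forall x_r\exists y_r\,\Sigma(z,u,v,x_1,\dots,x_r,y_1,\dots,y_r)=1$ such that $\forall z\forall u\forall v\,(\phi(z)\rightarrow\theta(z,u,v))$ is valid in every group, and moreover a non-abelian free group $\mathbb F$ satisfies $\forall z\forall u\forall v\,([u,v]=1\vee(\phi(z)\leftrightarrow\theta(z,u,v)))$. In particular, if $\phi$ is a non-trivial positive sentence, then $\forall u\forall v\,\theta(u,v)$ is a non-trivial positive sentence.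
   Context: Positive formulas are those built without negations (no constants). A positive sentence is non-trivial if it is false in a non-abelian free group. *)

(* Defs.v *)
From mathcomp Require Import all_boot.
Set Implicit Arguments.
Unset Strict Implicit.
Unset Printing Implicit Defensive.

Record group := Group {
  carrier :> Type;
  gmul : carrier -> carrier -> carrier;
  ginv : carrier -> carrier;
  gone : carrier;
  gmulA : forall x y z, gmul x (gmul y z) = gmul (gmul x y) z;
  gmul1 : forall x, gmul gone x = x;
  gmulV : forall x, gmul (ginv x) x = gone
}.

Definition commutator (G : group) (u v : G) : G :=
  @gmul G (@gmul G (@ginv G u) (@ginv G v)) (@gmul G u v).

Definition is_hom (G H : group) (h : G -> H) : Prop :=
  forall x y, h (@gmul G x y) = @gmul H (h x) (h y).

Definition free_on (F : group) (I : Type) (b : I -> F) : Prop :=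
  forall (G : group) (f : I -> G),
    exists h : F -> G, [/\ is_hom h, (forall i, h (b i) = f i) &
      (forall h' : F -> G, is_hom h' -> (forall i, h' (b i) = f i) ->
          forall x, h' x = h x)].

Definition nonabelian_free (F : group) : Prop :=
  exists (I : Type) (b : I -> F), free_on b /\ exists i j : I, i <> j.

Inductive term (V : Type) :=
  | tvar of V
  | tone
  | tmul of term V & term V
  | tinv of term V.
Arguments tone {V}.

Fixpoint teval (G : group) (V : Type) (e : V -> G) (t : term V) : G :=
  match t with
  | tvar v => e v
  | tone => gone G
  | tmul t1 t2 => @gmul G (teval e t1) (teval e t2)
  | tinv t1 => @ginv G (teval e t1)
  end.

Inductive qfpos (V : Type) :=
  | qeq of term V & term V
  | qand of qfpos V & qfpos V
  | qor of qfpos V & qfpos V.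

Fixpoint qeval (G : group) (V : Type) (e : V -> G) (f : qfpos V) : Prop :=
  match f with
  | qeq s t => teval e s = teval e t
  | qand f1 f2 => qeval e f1 /\ qeval e f2
  | qor f1 f2 => qeval e f1 \/ qeval e f2
  end.

Definition sys_eval (G : group) (V : Type) (e : V -> G) (S : seq (term V)) : Prop :=
  foldr (fun w P => teval e w = gone G /\ P) True S.

Fixpoint AE (G : group) (r : nat) (P : seq G -> seq G -> Prop) : Prop :=
  match r with
  | 0 => P [::] [::]
  | r'.+1 => forall x : G, exists y : G,
        AE r' (fun xs ys => P (x :: xs) (y :: ys))
  end.

(* variables of phi(z): z_1..z_m, x_1..x_r, y_1..y_r *)
Definition phivar (m r : nat) : Type := ('I_m + ('I_r + 'I_r))%type.
(* variables of theta(z,u,v): z_1..z_m, u (= true), v (= false), x's, y's *)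
Definition thetavar (m r : nat) : Type := ('I_m + (bool + ('I_r + 'I_r)))%type.

Definition phi_env (G : group) (m r : nat) (z : 'I_m -> G) (xs ys : seq G)
  (w : phivar m r) : G :=
  match w with
  | inl i => z i
  | inr (inl i) => nth (gone G) xs i
  | inr (inr i) => nth (gone G) ys i
  end.

Definition theta_env (G : group) (m r : nat) (z : 'I_m -> G) (u v : G)
  (xs ys : seq G) (w : thetavar m r) : G :=
  match w with
  | inl i => z i
  | inr (inl true) => u
  | inr (inl false) => v
  | inr (inr (inl i)) => nth (gone G) xs i
  | inr (inr (inr i)) => nth (gone G) ys i
  end.

Definition holds_phi (G : group) (m r : nat) (chi : qfpos (phivar m r))
  (z : 'I_m -> G) : Prop :=
  AE r (fun xs ys => qeval (phi_env z xs ys) chi).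

Definition holds_theta (G : group) (m r : nat) (Sigma : seq (term (thetavar m r)))
  (z : 'I_m -> G) (u v : G) : Prop :=
  AE r (fun xs ys => sys_eval (theta_env z u v xs ys) Sigma).

(* a sentence (given by its truth value in each group) is non-trivial if it
   is false in some non-abelian free group *)
Definition nontrivial (S : group -> Prop) : Prop :=
  exists F : group, nonabelian_free F /\ ~ S F.

(* Submission.v *)
Require Import Defs.
From mathcomp Require Import all_boot.
From mathcomp Require Import zify.
From Stdlib Require Import Classical ClassicalEpsilon.
Set Implicit Arguments.
Unset Strict Implicit.
Unset Printing Implicit Defensive.

Module G1.

Section GL.
Variable G : group.
Local Notation "x ** y" := (@gmul G x y) (at level 40, left associativity).
Local Notation e := (gone G).
Local Notation inv := (@ginv G).

Lemma gmulV' (x : G) : x ** inv x = e.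
Proof.
have H1 : inv (inv x) ** inv x = e by apply: gmulV.
rewrite -[x ** inv x]gmul1 -{1}H1 -gmulA (gmulA (inv x)) gmulV gmul1 //.
Qed.

Lemma gmul1' (x : G) : x ** e = x.
Proof. by rewrite -(gmulV x) gmulA gmulV' gmul1. Qed.

Lemma gmulKg (x y : G) : inv x ** (x ** y) = y.
Proof. by rewrite gmulA gmulV gmul1. Qed.

Lemma gmulKVg (x y : G) : x ** (inv x ** y) = y.
Proof. by rewrite gmulA gmulV' gmul1. Qed.

Lemma gmulgK (x y : G) : (y ** x) ** inv x = y.
Proof. by rewrite -gmulA gmulV' gmul1'. Qed.

Lemma gmulgKV (x y : G) : (y ** inv x) ** x = y.
Proof. by rewrite -gmulA gmulV gmul1'. Qed.

Lemma gmulI (x y z : G) : x ** y = x ** z -> y = z.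
Proof. by move=> H; rewrite -(gmulKg x y) H gmulKg. Qed.

Lemma gmulIr (x y z : G) : y ** x = z ** x -> y = z.
Proof. by move=> H; rewrite -(gmulgK x y) H gmulgK. Qed.

Lemma inv_uniq (x y : G) : x ** y = e -> y = inv x.
Proof. by move=> H; apply: (gmulI (x := x)); rewrite H gmulV'. Qed.

Lemma ginvK (x : G) : inv (inv x) = x.
Proof. by symmetry; apply: inv_uniq; rewrite gmulV. Qed.

Lemma ginvM (x y : G) : inv (x ** y) = inv y ** inv x.
Proof. by symmetry; apply: inv_uniq; rewrite -gmulA (gmulA y) gmulV' gmul1 gmulV'. Qed.

Lemma ginv1 : inv e = e.
Proof. by symmetry; apply: inv_uniq; rewrite gmul1. Qed.

Lemma ginv_eq1 (x : G) : inv x = e -> x = e.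
Proof. by move=> H; rewrite -(ginvK x) H ginv1. Qed.

Definition comm (x y : G) := x ** y = y ** x.

Lemma commutator1P (u v : G) : commutator u v = e <-> comm u v.
Proof.
rewrite /commutator /comm; split=> H.
  by have := inv_uniq H; rewrite ginvM !ginvK.
by rewrite H gmulA gmulgKV gmulV.
Qed.

Lemma comm_sym (x y : G) : comm x y -> comm y x.
Proof. by []. Qed.

Lemma commM (x y z : G) : comm x y -> comm x z -> comm x (y ** z).
Proof. by rewrite /comm => H1 H2; rewrite gmulA H1 -gmulA H2 gmulA. Qed.

Lemma commV (x y : G) : comm x y -> comm x (inv y).
Proof.
rewrite /comm => H; apply: (gmulI (x := y)); rewrite gmulA -H -gmulA gmulV' gmul1'.
by rewrite gmulA gmulV' gmul1.
Qed.

Lemma comm_refl (x : G) : comm x x. Proof. by []. Qed.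

Fixpoint pow (x : G) n := if n is n'.+1 then x ** pow x n' else e.

Lemma comm_pow (x y : G) n : comm x y -> comm x (pow y n).
Proof.
move=> H; elim: n => [|n IH] /=; first by rewrite /comm gmul1 gmul1'.
exact: commM.
Qed.

Lemma powSr (x : G) n : pow x n.+1 = pow x n ** x.
Proof. by have := comm_pow n (comm_refl x). Qed.

Lemma powD (x : G) n m : pow x (n + m) = pow x n ** pow x m.
Proof. by elim: n => [|n IH] /=; rewrite ?gmul1 // IH gmulA. Qed.

Lemma powM (x : G) a b : pow (pow x a) b = pow x (a * b).
Proof. by elim: b => [|b IH]; rewrite ?muln0 //= IH mulnS powD. Qed.

Lemma pow_inv (x : G) n : inv (pow x n) = pow (inv x) n.
Proof.
elim: n => [|n IH] /=; first exact: ginv1.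
by rewrite ginvM IH -powSr.
Qed.

Lemma pow_one n : pow e n = e.
Proof. by elim: n => //= n ->; rewrite gmul1. Qed.

Definition cj (g x : G) := g ** x ** inv g.

Lemma cjM g x y : cj g (x ** y) = cj g x ** cj g y.
Proof. by rewrite /cj !gmulA gmulgKV. Qed.

Lemma cjV g x : cj g (inv x) = inv (cj g x).
Proof. by rewrite /cj !ginvM ginvK gmulA. Qed.

Lemma cj1 g : cj g e = e.
Proof. by rewrite /cj gmul1' gmulV'. Qed.

Lemma cj_pow g x n : cj g (pow x n) = pow (cj g x) n.
Proof. by elim: n => [|n IH] /=; rewrite ?cj1 // cjM IH. Qed.

Lemma cjK g x : cj (inv g) (cj g x) = x.
Proof. by rewrite /cj ginvK !gmulA gmulgKV gmulV gmul1. Qed.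

Lemma cjKV g x : cj g (cj (inv g) x) = x.
Proof. by rewrite -{1}(ginvK g) cjK. Qed.

Lemma cj_inj g x y : cj g x = cj g y -> x = y.
Proof. by move=> H; rewrite -(cjK g x) H cjK. Qed.

Lemma cj_comm g x y : comm x y <-> comm (cj g x) (cj g y).
Proof.
rewrite /comm -!cjM; split; first by move=> ->.
by move/cj_inj.
Qed.

Lemma cj_eq1 g x : cj g x = e -> x = e.
Proof. by move=> H; apply: (@cj_inj g); rewrite H cj1. Qed.

End GL.

End G1.
Import G1.

Module G2.

Section GL2.
Variable G : group.
Local Notation "x ** y" := (@gmul G x y) (at level 40, left associativity).
Local Notation e := (gone G).
Local Notation inv := (@ginv G).

Definition cyc (r y : G) := exists n, y = pow r n \/ y = pow (inv r) n.
Definition CCprop := forall x : G, x <> e -> exists r, forall y, comm x y <-> cyc r y.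
Definition TFprop := forall (x : G) n, pow x n.+1 = e -> x = e.
Definition CTprop := forall x y z : G, x <> e -> comm x y -> comm x z -> comm y z.
Definition Lprop := forall b g : G, b <> e -> comm b (cj g b) -> comm g b.

Lemma pow1 (x : G) : pow x 1 = x.
Proof. by rewrite /= gmul1'. Qed.

Lemma cyc_comm2 r y z : cyc r y -> comm r z -> comm z y.
Proof.
move=> [n [->|->]] H; apply: comm_pow; first by [].
by apply: commV.
Qed.

Lemma cyc_comm r y : cyc r y -> comm r y.
Proof. by move=> H; apply: (cyc_comm2 H). Qed.

Lemma CC_CT : CCprop -> CTprop.
Proof.
move=> CC x y z nx Hy Hz.
have [r Hr] := CC x nx.
apply: (cyc_comm2 (r := r)); first by apply/Hr.
by apply: cyc_comm; apply/Hr.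
Qed.

Lemma cjMg (g h x : G) : cj (g ** h) x = cj g (cj h x).
Proof. by rewrite /cj ginvM !gmulA. Qed.

Lemma cj_fix (g r : G) : cj g r = r -> comm g r.
Proof. by rewrite /cj /comm => H; apply: (@gmulIr _ (inv g)); rewrite H -gmulA gmulV' gmul1'. Qed.

Lemma powA_case (r : G) n : TFprop -> r <> e -> r = pow r n -> n = 1.
Proof.
move=> TF nr; case: n => [|[|k]] /= H; first by case: (nr H).
  by [].
exfalso; apply: nr; apply: (TF _ k).
apply: (@gmulI _ r); rewrite gmul1' [RHS]H //.
Qed.

Lemma powB_case (r : G) n : TFprop -> r <> e -> r = pow (inv r) n -> False.
Proof.
move=> TF nr H; apply: nr; apply: (TF _ n).
rewrite powSr {2}H -pow_inv; exact: gmulV'.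
Qed.

Lemma CC_L : CCprop -> TFprop -> Lprop.
Proof.
move=> CC TF b g nb Hd.
have CT := CC_CT CC.
have [r HC] := CC b nb.
have [k Hbk] : cyc r b by apply/HC.
have nr : r <> e.
  move=> re; apply: nb; rewrite re in Hbk; case: Hbk => ->;
    by rewrite ?ginv1 pow_one.
have nd : cj g b <> e by move/cj_eq1.
have HCd : forall y, comm b y <-> comm (cj g b) y.
  move=> y; split=> H.
    exact: (CT b).
  by apply: (CT (cj g b)) => //; apply: comm_sym.
have Hbr : comm b r by apply/HC; exists 1; left; rewrite pow1.
have [a Ha] : cyc r (cj g r).
  apply/HC; apply/HCd; exact: (proj1 (cj_comm g b r) Hbr).
have [c Hc] : cyc r (cj (inv g) r).
  apply/HC; rewrite -{1}(cjK g b); exact: (proj1 (cj_comm (inv g) (cj g b) r) (proj1 (HCd r) Hbr)).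
have Hr : r = cj g (cj (inv g) r) by rewrite cjKV.
have Hac : r = pow r (a * c) \/ r = pow (inv r) (a * c).
  case: Hc => Hc; rewrite Hc in Hr; case: Ha => Ha; rewrite cj_pow ?cjV Ha ?pow_inv ?ginvK powM in Hr; tauto.
have a1 : a = 1.
  case: Hac => H.
    by have /eqP := powA_case TF nr H; rewrite muln_eq1 => /andP [/eqP].
  by case: (powB_case TF nr H).
subst a; rewrite !pow1 in Ha.
have Hgr : comm g r.
  case: Ha => Ha; first exact: cj_fix.
  have Hg2 : cj (g ** g) r = r by rewrite cjMg Ha cjV Ha ginvK.
  have c2 := cj_fix Hg2.
  case: (classic (g ** g = e)) => g2.
    have ge : g = e by apply: (TF _ 1); rewrite /= gmul1'.
    by rewrite ge /comm gmul1 gmul1'.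
  have cg : comm g r.
    apply: (CT (g ** g)) => //; by rewrite /comm gmulA.
  exfalso; apply: nr; apply: (TF _ 1); rewrite /= gmul1'.
  have : cj g r = r by rewrite /cj cg gmulgK.
  by rewrite Ha => Hri; rewrite -{2}Hri gmulV'.
case: Hbk => ->; apply: comm_pow => //; exact: commV.
Qed.

Lemma OR_lemma (CT : CTprop) (L : Lprop) (a b u v : G) :
  ~ comm u v -> comm a b -> comm a (cj u b) -> comm a (cj v b) -> a = e \/ b = e.
Proof.
move=> nuv H1 H2 H3.
case: (classic (a = e)) => na; first by left.
case: (classic (b = e)) => nb; first by right.
exfalso; apply: nuv.
have Lu : comm u b by apply: L => //; apply: (CT a).
have Lv : comm v b by apply: L => //; apply: (CT a).
by apply: (CT b).
Qed.

End GL2.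

End G2.
Import G2.

Module W1.

Section Words.
Variable I : Type.
Variable deq : forall x y : I, {x = y} + {x <> y}.

Definition L := (I * bool)%type.
Definition deqb (i j : I) : bool := if deq i j then true else false.
Lemma deqbP i j : reflect (i = j) (deqb i j).
Proof. by rewrite /deqb; case: (deq i j) => H; constructor. Qed.

Definition linv (x : L) : L := (x.1, ~~ x.2).
Definition canc (x y : L) : bool := deqb x.1 y.1 && (x.2 != y.2).
Definition nc (x y : L) : bool := ~~ canc x y.

Lemma linvK : involutive linv.
Proof. by case=> i b; rewrite /linv /= negbK. Qed.

Lemma cancP x y : reflect (y = linv x) (canc x y).
Proof.
case: x y => [i a] [j b]; rewrite /canc /linv /=.
case: deqbP => [->|ne] /=.
  by case: a; case: b; constructor.
by constructor; case=> E _; apply: ne.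
Qed.

Lemma canc_linv x : canc x (linv x).
Proof. exact/cancP. Qed.

Lemma canc_sym x y : canc x y = canc y x.
Proof.
apply/cancP/cancP => ->; by rewrite linvK.
Qed.

Lemma canc_linv2 x y : canc (linv y) (linv x) = canc x y.
Proof.
by apply/cancP/cancP; rewrite linvK => H; rewrite H.
Qed.

Definition reduced (w : seq L) : bool := sorted nc w.

Lemma reduced_cons x w :
  reduced (x :: w) = (if w is y :: _ then nc x y else true) && reduced w.
Proof. by case: w. Qed.

Lemma reduced_behead x w : reduced (x :: w) -> reduced w.
Proof. by rewrite reduced_cons => /andP []. Qed.

Lemma reduced_catl u v : reduced (u ++ v) -> reduced u.
Proof.
elim: u => // x u IH; rewrite cat_cons !reduced_cons => /andP [H1 H2].
rewrite IH // andbT; case: u {IH} H1 H2 => //.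
Qed.

Lemma reduced_catr u v : reduced (u ++ v) -> reduced v.
Proof. by elim: u => // x u IH /reduced_behead. Qed.

Definition push (x : L) (w : seq L) : seq L :=
  if w is y :: w' then (if canc x y then w' else x :: w) else [:: x].

Definition mulw (u v : seq L) := foldr push v u.
Definition invw (u : seq L) := rev (map linv u).

Lemma push_red x w : reduced w -> reduced (push x w).
Proof.
case: w => [|y w] //= H; case: ifP => Hc.
  exact: reduced_behead H.
by rewrite reduced_cons /nc Hc.
Qed.

Lemma mulw_red u v : reduced v -> reduced (mulw u v).
Proof. by move=> H; elim: u => //= x u IH; apply: push_red. Qed.

Lemma push_cancel x w : reduced w -> push x (push (linv x) w) = w.
Proof.
case: w => [|y w] /=; first by rewrite canc_linv.
case: (cancP (linv x) y) => [Hy|Hy] H.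
  rewrite linvK in Hy; subst y.
  case: w H => [|z w] //= H; case: ifP => // Hc.
  by move: H; rewrite /nc Hc.
by rewrite /= canc_linv.
Qed.

Lemma mulw_push s x w : reduced w -> mulw (push x s) w = push x (mulw s w).
Proof.
move=> Hw; case: s => [|y s] //=.
case: ifP => // /cancP ->.
by rewrite push_cancel //; apply: mulw_red.
Qed.

Lemma mulwA u v w : reduced w -> mulw (mulw u v) w = mulw u (mulw v w).
Proof.
move=> Hw; elim: u => [|x u IH] //=.
by rewrite mulw_push // IH.
Qed.

Lemma invw_cons x u : invw (x :: u) = rcons (invw u) (linv x).
Proof. by rewrite /invw /= rev_cons. Qed.

Lemma invw_rcons x u : invw (rcons u x) = linv x :: invw u.
Proof. by rewrite /invw map_rcons rev_rcons. Qed.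

Lemma invw_cat u v : invw (u ++ v) = invw v ++ invw u.
Proof. by rewrite /invw map_cat rev_cat. Qed.

Lemma invwK u : invw (invw u) = u.
Proof.
rewrite /invw map_rev revK -map_comp.
by elim: u => //= x u ->; rewrite linvK.
Qed.

Lemma mulw_rcons u x v : mulw (rcons u x) v = mulw u (push x v).
Proof. by rewrite /mulw foldr_rcons. Qed.

Lemma mulwV u : reduced u -> mulw (invw u) u = [::].
Proof.
elim: u => [|x u IH] // H.
rewrite invw_cons mulw_rcons /= canc_sym canc_linv.
exact: IH (reduced_behead H).
Qed.

Lemma mulw_cat u v : reduced (u ++ v) -> mulw u v = u ++ v.
Proof.
elim: u => [|x u IH] // H.
rewrite /= IH; last exact: reduced_behead H.
move: H; rewrite cat_cons reduced_cons.
case: (u ++ v) => [|y t] //= /andP [H1 _].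
by move: H1; rewrite /nc; case: ifP.
Qed.

Lemma invw_red u : reduced u -> reduced (invw u).
Proof.
rewrite /reduced /invw rev_sorted sorted_map.
case: u => //= x u.
apply: sub_path => a b /=; by rewrite /nc canc_linv2 canc_sym.
Qed.

Definition Wc := {w : seq L | reduced w}.
Definition Wmul (a b : Wc) : Wc := exist _ (mulw (sval a) (sval b)) (mulw_red _ (svalP b)).
Definition Winv (a : Wc) : Wc := exist _ (invw (sval a)) (invw_red (svalP a)).
Definition Wone : Wc := exist _ [::] isT.

Lemma Wval_inj (a b : Wc) : sval a = sval b -> a = b.
Proof.
case: a b => [a Ha] [b Hb] /= E; subst b.
by rewrite (bool_irrelevance Ha Hb).
Qed.

Lemma WmulA (x y z : Wc) : Wmul x (Wmul y z) = Wmul (Wmul x y) z.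
Proof. by apply: Wval_inj => /=; rewrite mulwA //; exact: (svalP z). Qed.

Lemma Wmul1 (x : Wc) : Wmul Wone x = x.
Proof. by apply: Wval_inj. Qed.

Lemma WmulV (x : Wc) : Wmul (Winv x) x = Wone.
Proof. by apply: Wval_inj => /=; rewrite mulwV //; exact: (svalP x). Qed.

Definition W : group := @Defs.Group Wc Wmul Winv Wone WmulA Wmul1 WmulV.

Definition Wletter (i : I) : W := exist _ [:: (i, true)] isT.

Section Eval.
Variable G : group.
Variable f : I -> G.
Local Notation "x ** y" := (@gmul G x y) (at level 40, left associativity).

Definition fl (x : L) : G := if x.2 then f x.1 else ginv (f x.1).
Definition evw (w : seq L) : G := foldr (fun x acc => fl x ** acc) (gone G) w.

Lemma fl_linv x : fl x ** fl (linv x) = gone G.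
Proof. by case: x => i [] /=; rewrite /fl /= ?gmulV ?gmulV'. Qed.

Lemma evw_push x w : evw (push x w) = fl x ** evw w.
Proof.
case: w => [|y w] //=; case: ifP => // /cancP ->.
by rewrite gmulA fl_linv gmul1.
Qed.

Lemma evw_mul u v : evw (mulw u v) = evw u ** evw v.
Proof.
elim: u => [|x u IH] /=; first by rewrite gmul1.
by rewrite evw_push IH gmulA.
Qed.

Definition Wev (a : W) : G := evw (sval a).

Lemma Wev_hom : is_hom Wev.
Proof. by move=> x y; rewrite /Wev /= evw_mul. Qed.

Lemma Wev_letter i : Wev (Wletter i) = f i.
Proof. by rewrite /Wev /= /fl /= gmul1'. Qed.

End Eval.
End Words.

End W1.
Import W1.

Module W2.

Section Lists.
Variable T : Type.
Implicit Types x y z w s : seq T.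

Lemma catI s a b : s ++ a = s ++ b -> a = b.
Proof. by elim: s => //= x s IH [] /IH. Qed.

Fixpoint cpow w n := if n is n'.+1 then w ++ cpow w n' else [::].

Lemma size_cpow w n : size (cpow w n) = n * size w.
Proof. by elim: n => //= n IH; rewrite size_cat IH mulSn. Qed.

Lemma comm_cpow x w n : x ++ w = w ++ x -> x ++ cpow w n = cpow w n ++ x.
Proof.
move=> H; elim: n => [|n IH] /=; first by rewrite cats0.
by rewrite catA H -catA IH catA.
Qed.

Lemma pref x w n : x ++ w = w ++ x -> size x <= size (cpow w n) ->
  take (size x) (cpow w n) = x.
Proof.
move=> H hs; have := comm_cpow n H => E.
by rewrite -(takel_cat x hs) -E take_size_cat.
Qed.

Lemma ML w : w <> [::] -> forall x y, x ++ w = w ++ x -> y ++ w = w ++ y -> x ++ y = y ++ x.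
Proof.
move=> nw.
suff H : forall n x y, size x + size y <= n -> x ++ w = w ++ x -> y ++ w = w ++ y ->
  x ++ y = y ++ x by move=> x y; apply: (H _ x y (leqnn _)).
elim=> [|n IH] x y.
  by case: x => [|? ?]; case: y => [|? ?].
wlog le : x y / size x <= size y.
  move=> Hw Hs Hx Hy; case: (leqP (size x) (size y)) => h; first exact: Hw.
  by symmetry; apply: Hw => //; [exact: ltnW | rewrite addnC].
move=> Hs Hx Hy.
case: (classic (x = [::])) => [->|nx]; first by rewrite cats0.
have sw : 0 < size w by case: (w) nw.
have Hle : size y <= size (cpow w (size y)) by rewrite size_cpow leq_pmulr.
have hx := pref Hx (leq_trans le Hle).
have hy := pref Hy Hle.
have tx : take (size x) y = x by rewrite -hy take_takel.
have ey : y = x ++ drop (size x) y by rewrite -{1}tx cat_take_drop.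
set y' := drop (size x) y in ey.
have Hy' : y' ++ w = w ++ y'.
  apply: (@catI x); rewrite catA -ey Hy ey catA -Hx -catA //.
have nx0 : 0 < size x by case: (x) nx.
have IH' : x ++ y' = y' ++ x.
  apply: IH => //; move: Hs; rewrite ey size_cat; lia.
by rewrite ey -catA -IH' catA.
Qed.

Lemma ex_min (P : nat -> Prop) : (exists n, P n) -> exists n, P n /\ forall m, P m -> n <= m.
Proof.
move=> [n Pn]; apply: NNPP => H.
suff : forall k m, m <= k -> ~ P m by move/(_ n n (leqnn n)).
elim=> [|k IH] m hm Pm; apply: H; exists m; split=> // m' Pm'.
  by move: hm; rewrite leqn0 => /eqP ->.
rewrite leqNgt; apply/negP => lt; apply: (IH m') => //; lia.
Qed.

Lemma Sgen c : c <> [::] -> exists rho, [/\ rho <> [::], rho ++ c = c ++ rho &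
  forall z, z ++ c = c ++ z -> exists k, z = cpow rho k].
Proof.
move=> nc.
have [n0 [[rho [nr Hr sr]] Hmin]] :=
  @ex_min (fun n => exists z, [/\ z <> [::], z ++ c = c ++ z & size z = n])
   (ex_intro _ (size c) (ex_intro _ c (And3 nc erefl erefl))).
exists rho; split=> //.
suff H : forall n z, size z <= n -> z ++ c = c ++ z -> exists k, z = cpow rho k.
  by move=> z; apply: (H _ z (leqnn _)).
elim=> [|n IH] z hz Hz.
  by exists 0; case: z hz Hz => [|? ?].
case: (classic (z = [::])) => [->|nz]; first by exists 0.
have mz : size rho <= size z by rewrite sr; apply: Hmin; exists z.
have Hrz : rho ++ z = z ++ rho by apply: (ML nc).
have tz : take (size rho) z = rho.
  by rewrite -(takel_cat rho mz) -Hrz take_size_cat.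
have ez : z = rho ++ drop (size rho) z by rewrite -{1}tz cat_take_drop.
set z' := drop (size rho) z in ez.
have Hz' : z' ++ c = c ++ z'.
  apply: (@catI rho); rewrite catA -ez Hz ez catA -Hr -catA //.
have nr0 : 0 < size rho by case: (rho) nr.
have [k Hk] : exists k, z' = cpow rho k.
  apply: IH => //; move: hz; rewrite ez size_cat; lia.
by exists k.+1; rewrite ez Hk.
Qed.

End Lists.

End W2.
Import W2.

Module W3.

Section W3.
Variable I : Type.
Variable deq : forall x y : I, {x = y} + {x <> y}.
Local Notation L := (L I).
Local Notation reduced := (reduced deq).
Local Notation nc := (nc deq).
Local Notation canc := (canc deq).
Local Notation mulw := (mulw deq).
Local Notation W := (W deq).

Definition jn (u v : seq L) : bool :=
  if u is x :: u' then (if v is y :: _ then nc (last x u') y else true) else true.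

Lemma reduced_cat u v : reduced (u ++ v) = [&& reduced u, jn u v & reduced v].
Proof.
case: u => [|x u] //=; case: v => [|y v]; rewrite ?cats0 ?andbT //.
by rewrite /W1.reduced /= cat_path /= andbA.
Qed.

Lemma jn_eq u v B l h t : u = rcons B l -> v = h :: t -> jn u v = nc l h.
Proof. by move=> -> ->; case: B => [|x B] //=; rewrite last_rcons. Qed.

Lemma canc_xx x : canc x x = false.
Proof. by apply/(cancP deq); case: x => i [] []. Qed.

Definition cycred c := reduced c && jn c c.

Lemma cpow_red c n : cycred c -> reduced (cpow c n).
Proof.
case/andP=> Hc Hj; elim: n => [|n IH] //=.
rewrite reduced_cat Hc IH /= andbT.
case: n {IH} => [|n] /=; first by case: (c).
case: c Hc Hj => [|x c] //= _ Hj.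
Qed.

Lemma size_push x w : size (push deq x w) <= (size w).+1.
Proof. case: w => [|y w] //=; case: ifP => //= _; lia. Qed.

Lemma size_mulw u v : size (mulw u v) <= size u + size v.
Proof.
elim: u => [|x u IH] //=.
apply: leq_trans (size_push _ _) _; lia.
Qed.

Lemma mulw_notjn u v : jn u v = false -> size (mulw u v) < size u + size v.
Proof.
case: u => [|x u] //; case: v => [|y v] // Hj.
rewrite (lastI x u) mulw_rcons /=.
move: Hj => /=; rewrite /W1.nc; case: ifP => // _ _.
apply: leq_ltn_trans (size_mulw _ _) _; rewrite size_rcons size_belast /=; lia.
Qed.

Lemma K2 c y : cycred c -> reduced y ->
  mulw c y = mulw y c -> mulw c (invw y) = mulw (invw y) c ->
  c ++ y = y ++ c \/ c ++ invw y = invw y ++ c.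
Proof.
move=> Hcc Hy E1 E2; have /andP [Hc Hjc] := Hcc.
case R1: (reduced (c ++ y)); case R2: (reduced (y ++ c)).
- by left; rewrite -(mulw_cat R1) -(mulw_cat R2).
- move: R2; rewrite reduced_cat Hc Hy andbT => /mulw_notjn.
  by rewrite -E1 (mulw_cat R1) size_cat addnC ltnn.
- move: R1; rewrite reduced_cat Hc Hy andbT => /mulw_notjn.
  by rewrite E1 (mulw_cat R2) size_cat addnC ltnn.
right.
move: R1 R2; rewrite !reduced_cat Hc Hy !andbT => J1 J2.
case: c Hcc Hc Hjc E1 E2 J1 J2 => [|hc C'] // Hcc Hc Hjc E1 E2 J1 J2.
case: y Hy E1 E2 J1 J2 => [|hy Y'] // Hy E1 E2 J1 J2.
have ec := lastI hc C'; have ey := lastI hy Y'.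
set lc := last hc C' in ec; set ly := last hy Y' in ey.
have Hjc' : nc lc hc by rewrite -(jn_eq ec (erefl (hc :: C'))).
have {J1}J1 : hy = linv lc.
  by apply/(cancP deq); move: J1; rewrite (jn_eq ec (erefl (hy :: Y'))) /W1.nc => /negbFE.
have {J2}J2 : hc = linv ly.
  by apply/(cancP deq); move: J2; rewrite (jn_eq ey (erefl (hc :: C'))) /W1.nc => /negbFE.
have iy1 : invw (hy :: Y') = linv ly :: invw (belast hy Y') by rewrite ey invw_rcons.
have iy2 : invw (hy :: Y') = rcons (invw Y') (linv hy) by rewrite invw_cons.
have Rc : reduced ((hc :: C') ++ invw (hy :: Y')).
  rewrite reduced_cat Hc invw_red // andbT.
  by rewrite (jn_eq ec iy1) -J2.
have Rc' : reduced (invw (hy :: Y') ++ (hc :: C')).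
  rewrite reduced_cat Hc invw_red // andbT.
  by rewrite (jn_eq iy2 (erefl (hc :: C'))) J1 linvK.
by rewrite -(mulw_cat Rc) -(mulw_cat Rc').
Qed.

End W3.

End W3.
Import W3.

Module W4.

Section CycConj.
Variable G : group.
Lemma cyc_cj1 (g r y : G) : cyc r y -> cyc (cj g r) (cj g y).
Proof. by move=> [n [->|->]]; exists n; [left | right]; rewrite cj_pow ?cjV. Qed.

Lemma cyc_cj (g r y : G) : cyc r y <-> cyc (cj g r) (cj g y).
Proof.
split; first exact: cyc_cj1.
by move/(cyc_cj1 (ginv g)); rewrite !cjK.
Qed.

Lemma CC_conj (p c rho : G) : (forall y, comm c y <-> cyc rho y) ->
  forall y, comm (cj p c) y <-> cyc (cj p rho) y.
Proof.
move=> H y.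
rewrite -{1}(cjKV p y) -(cj_comm p) H -{2}(cjKV p y) -cyc_cj //.
Qed.
End CycConj.

Section W4.
Variable I : Type.
Variable deq : forall x y : I, {x = y} + {x <> y}.
Local Notation L := (L I).
Local Notation reduced := (reduced deq).
Local Notation nc := (nc deq).
Local Notation canc := (canc deq).
Local Notation mulw := (mulw deq).
Local Notation W := (W deq).
Local Notation cycred := (cycred deq).

Lemma decomp_w w : reduced w -> w <> [::] ->
  exists p c, [/\ cycred c, c <> [::] & w = p ++ c ++ invw p].
Proof.
suff H : forall n w, size w <= n -> reduced w -> w <> [::] ->
  exists p c, [/\ cycred c, c <> [::] & w = p ++ c ++ invw p].
  by move=> Hw nw; apply: (H _ w (leqnn _)).
clear w; elim=> [|n IH] w hs Hw nw; first by case: w hs Hw nw.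
case Jw: (jn deq w w).
  by exists [::], w; split=> //; [rewrite /W3.cycred Hw Jw | rewrite /= cats0].
case: w Hw nw hs Jw => [|x w'] // Hw _ hs Jw.
case/lastP: w' Hw hs Jw => [|m l] Hw hs Jw.
  by rewrite /= /W1.nc canc_xx in Jw.
have Hxl : x = linv l.
  apply/(cancP deq); move: Jw.
  rewrite (@jn_eq _ deq (x :: rcons m l) (x :: rcons m l) (x :: m) l x (rcons m l) erefl erefl).
  by rewrite /W1.nc => /negbFE.
have nm : m <> [::].
  move=> em; move: Hw; rewrite em /= /W1.nc andbT Hxl.
  by rewrite canc_sym canc_linv.
have Rm : reduced m.
  by move/reduced_behead: Hw; rewrite -cats1 => /reduced_catl.
have [q [c [Hc nc0 Em]]] : exists p c, [/\ cycred c, c <> [::] & m = p ++ c ++ invw p].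
  apply: IH => //; move: hs; rewrite /= size_rcons; lia.
exists (x :: q), c; split=> //.
by rewrite invw_cons Em Hxl linvK /= !rcons_cat.
Qed.

Lemma Wval_mul (a b : W) : sval (gmul a b) = mulw (sval a) (sval b).
Proof. by []. Qed.
Lemma Wval_inv (a : W) : sval (ginv a) = invw (sval a).
Proof. by []. Qed.
Lemma Wval_one : sval (gone W) = [::].
Proof. by []. Qed.

Lemma Wpow_val (a : W) n : reduced (cpow (sval a) n) -> sval (pow a n) = cpow (sval a) n.
Proof.
elim: n => [|n IH] //= H.
rewrite IH; last exact: reduced_catr H.
exact: mulw_cat.
Qed.

Lemma CCc (c : W) : cycred (sval c) -> sval c <> [::] ->
  exists rho : W, forall y, comm c y <-> cyc rho y.
Proof.
move=> Hcc nc0.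
have [rho [nr Hr Hgen]] := Sgen nc0.
set N := size rho.
have sc : 0 < size (sval c) by case: (sval c) nc0.
have hN : size rho <= size (cpow (sval c) N) by rewrite size_cpow leq_pmulr.
have Hp := pref Hr hN.
have RN : reduced (cpow (sval c) N.+1) := cpow_red N.+1 Hcc.
have Rrho : reduced rho.
  have := cpow_red N Hcc; rewrite -(cat_take_drop (size rho) (cpow (sval c) N)) Hp.
  exact: reduced_catl.
have Rcr : reduced (sval c ++ rho).
  move: RN; rewrite /= -(cat_take_drop (size rho) (cpow (sval c) N)) Hp catA.
  exact: reduced_catl.
pose rW : W := exist _ rho Rrho.
have Hrc : comm rW c.
  apply: Wval_inj; rewrite !Wval_mul /= (mulw_cat Rcr) mulw_cat //.
  by rewrite Hr.
exists rW => y; split; last by move=> Hy; apply: (cyc_comm2 Hy Hrc).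
move=> H.
have E1 : mulw (sval c) (sval y) = mulw (sval y) (sval c) by rewrite -!Wval_mul H.
have E2 : mulw (sval c) (invw (sval y)) = mulw (invw (sval y)) (sval c).
  by rewrite -!Wval_inv -!Wval_mul (commV H).
case: (K2 Hcc (svalP y) E1 E2) => Hy.
  have [k Hk] := Hgen _ (esym Hy).
  exists k; left; apply: Wval_inj.
  by rewrite Wpow_val /= -Hk //; exact: (svalP y).
have [k Hk] := Hgen _ (esym Hy).
exists k; right.
rewrite -pow_inv -(ginvK y); congr ginv; apply: Wval_inj.
by rewrite Wpow_val /= -Hk //; exact: (svalP (ginv y)).
Qed.

Lemma TFc (c : W) n : cycred (sval c) -> sval c <> [::] -> pow c n.+1 <> gone W.
Proof.
move=> Hcc nc0 H.
have := Wpow_val (cpow_red n.+1 Hcc); rewrite H Wval_one.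
by case: (sval c) nc0.
Qed.

Lemma decompW (x : W) : x <> gone W ->
  exists p c : W, [/\ cycred (sval c), sval c <> [::] & x = cj p c].
Proof.
move=> nx.
have nx' : sval x <> [::] by move=> E; apply: nx; apply: Wval_inj.
have [p [c [Hc nc0 Ex]]] := decomp_w (svalP x) nx'.
have Rx : reduced (p ++ c ++ invw p) by rewrite -Ex; exact: (svalP x).
have Rp : reduced p := reduced_catl Rx.
have Rci : reduced (c ++ invw p) := reduced_catr Rx.
have Rc : reduced c := reduced_catl Rci.
exists (exist _ p Rp), (exist _ c Rc); split=> //.
apply: Wval_inj; rewrite /cj !Wval_mul Wval_inv /= Ex.
rewrite mulwA; last exact: invw_red.
by rewrite (mulw_cat Rci) (mulw_cat Rx).
Qed.

Lemma W_CC : CCprop W.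
Proof.
move=> x nx.
have [p [c [Hc nc0 ->]]] := decompW nx.
have [rho Hrho] := CCc Hc nc0.
exists (cj p rho); exact: CC_conj.
Qed.

Lemma W_TF : TFprop W.
Proof.
move=> x n H; apply: NNPP => nx.
have [p [c [Hc nc0 Ex]]] := decompW nx.
apply: (TFc (n:=n) Hc nc0).
apply: (@cj_eq1 _ p); by rewrite cj_pow -Ex.
Qed.

Lemma W_CT : CTprop W.
Proof. exact: CC_CT W_CC. Qed.

Lemma W_L : Lprop W.
Proof. exact: CC_L W_CC W_TF. Qed.

End W4.

End W4.
Import W4.

Module F.

Section Hom.
Variables G H : group.
Variable h : G -> H.
Hypothesis hh : is_hom h.

Lemma hom1 : h (gone G) = gone H.
Proof.
apply: (@gmulI _ (h (gone G))); rewrite -hh gmul1 gmul1' //.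
Qed.

Lemma homV x : h (ginv x) = ginv (h x).
Proof.
apply: (@gmulIr _ (h x)); rewrite -hh gmulV gmulV hom1 //.
Qed.

Lemma hom_cj g x : h (cj g x) = cj (h g) (h x).
Proof. by rewrite /cj !hh homV. Qed.

Lemma hom_comm x y : comm x y -> comm (h x) (h y).
Proof. by rewrite /comm -!hh => ->. Qed.

Hypothesis hinj : forall x y, h x = h y -> x = y.

Lemma hom_ne1 x : x <> gone G -> h x <> gone H.
Proof. by move=> nx E; apply: nx; apply: hinj; rewrite E hom1. Qed.

Lemma comm_back x y : comm (h x) (h y) -> comm x y.
Proof. by rewrite /comm -!hh => /hinj. Qed.

Lemma transfer_CT : CTprop H -> CTprop G.
Proof.
move=> CT x y z nx H1 H2; apply: comm_back.
exact: (CT (h x) _ _ (hom_ne1 nx) (hom_comm H1) (hom_comm H2)).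
Qed.

Lemma transfer_L : Lprop H -> Lprop G.
Proof.
move=> L b g nb H1; apply: comm_back; apply: L; first exact: hom_ne1.
by rewrite -hom_cj; apply: hom_comm.
Qed.
End Hom.

Definition cdeq (I : Type) : forall x y : I, {x = y} + {x <> y} :=
  fun x y => excluded_middle_informative (x = y).

Lemma free_embed (F : group) (I : Type) (b : I -> F) : free_on b ->
  exists h : F -> W (@cdeq I), [/\ is_hom h, (forall x y, h x = h y -> x = y) &
     forall i, h (b i) = Wletter (@cdeq I) i].
Proof.
move=> Hfree.
have [h [hh hb _]] := Hfree (W (@cdeq I)) (Wletter (@cdeq I)).
have [h0 [_ _ Hu]] := Hfree F b.
pose g : W (@cdeq I) -> F := Wev b.
have ghh : is_hom (fun x => g (h x)).
  by move=> y z /=; rewrite hh /g Wev_hom.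
have ghb : forall i, g (h (b i)) = b i by move=> i; rewrite hb /g Wev_letter.
have gh x : g (h x) = x.
  by rewrite (Hu _ ghh ghb x) -(Hu id (fun _ _ => erefl) (fun _ => erefl) x).
exists h; split=> // x y E.
by rewrite -(gh x) -(gh y) E.
Qed.

Lemma free_CT (F : group) : nonabelian_free F -> CTprop F.
Proof.
move=> [I [b [Hf _]]].
have [h [hh hi _]] := free_embed Hf.
exact: (transfer_CT hh hi (@W_CT _ (@cdeq I))).
Qed.

Lemma free_L (F : group) : nonabelian_free F -> Lprop F.
Proof.
move=> [I [b [Hf _]]].
have [h [hh hi _]] := free_embed Hf.
exact: (transfer_L hh hi (@W_L _ (@cdeq I))).
Qed.

Lemma free_noncomm (F : group) : nonabelian_free F -> exists u v : F, ~ comm u v.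
Proof.
move=> [I [b [Hf [i [j nij]]]]].
have [h [hh hi hb]] := free_embed Hf.
exists (b i), (b j) => /(hom_comm hh); rewrite !hb => E.
have := f_equal sval E; rewrite /= /canc /= !andbF.
by case=> E' _; apply: nij.
Qed.

End F.
Import F.

Module Main.

Fixpoint tmap (V V' : Type) (f : V -> V') (t : term V) : term V' :=
  match t with
  | tvar v => tvar (f v)
  | tone => tone
  | tmul a b => tmul (tmap f a) (tmap f b)
  | tinv a => tinv (tmap f a)
  end.

Lemma teval_tmap (G : group) V V' (e : V' -> G) (f : V -> V') t :
  teval e (tmap f t) = teval (fun v => e (f v)) t.
Proof. by elim: t => [v|//|a IHa b IHb|a IHa] /=; rewrite ?IHa ?IHb. Qed.

Lemma teval_ext (G : group) V (e1 e2 : V -> G) t :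
  (forall v, e1 v = e2 v) -> teval e1 t = teval e2 t.
Proof. by move=> H; elim: t => [v|//|a IHa b IHb|a IHa] /=; rewrite ?IHa ?IHb. Qed.

Lemma sys_cat (G : group) V (e : V -> G) A B :
  sys_eval e (A ++ B) <-> sys_eval e A /\ sys_eval e B.
Proof. by elim: A => [|a A IH] /=; [tauto | rewrite /sys_eval /= in IH *; tauto]. Qed.

Lemma AE_mono (G : group) n (P Q : seq G -> seq G -> Prop) :
  (forall xs ys, P xs ys -> Q xs ys) -> AE n P -> AE n Q.
Proof.
elim: n P Q => [|n IH] P Q H /=; first exact: H.
move=> HP x; have [y Hy] := HP x; exists y.
by apply: (IH _ _ _ Hy) => xs ys; apply: H.
Qed.

Section Formula.
Variables m r : nat.
Local Notation Vp := (phivar m r).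
Local Notation Vt := (thetavar m r).

Definition emb (w : Vp) : Vt :=
  match w with inl i => inl i | inr w' => inr (inr w') end.

Definition tcomm (a b : term Vt) : term Vt := tmul (tmul (tinv a) (tinv b)) (tmul a b).
Definition tcj (g a : term Vt) : term Vt := tmul (tmul g a) (tinv g).
Definition tU : term Vt := tvar (inr (inl true)).
Definition tV : term Vt := tvar (inr (inl false)).

Definition ORt (a b : term Vt) : seq (term Vt) :=
  [:: tcomm a b; tcomm a (tcj tU b); tcomm a (tcj tV b)].

Fixpoint ORL1 (a : term Vt) (B : seq (term Vt)) : seq (term Vt) :=
  if B is b :: B' then ORt a b ++ ORL1 a B' else [::].

Fixpoint ORL (A B : seq (term Vt)) : seq (term Vt) :=
  if A is a :: A' then ORL1 a B ++ ORL A' B else [::].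

Fixpoint D (f : qfpos Vp) : seq (term Vt) :=
  match f with
  | qeq s t => [:: tmul (tmap emb s) (tinv (tmap emb t))]
  | qand f g => D f ++ D g
  | qor f g => ORL (D f) (D g)
  end.

Section Sem.
Variable G : group.
Variable e : Vt -> G.
Local Notation Hold a := (teval e a = gone G).

Lemma comm1l (x : G) : comm (gone G) x.
Proof. by rewrite /comm gmul1 gmul1'. Qed.

Lemma comm1r (x : G) : comm x (gone G).
Proof. by rewrite /comm gmul1 gmul1'. Qed.

Lemma ORt_sound a b : Hold a \/ Hold b -> sys_eval e (ORt a b).
Proof.
rewrite /ORt /sys_eval /= => H.
have C : forall y z, teval e a = gone G \/ y = gone G -> commutator (teval e a) (cj z y) = gone G.
  move=> y z [Ha|Hy]; apply/commutator1P; first by rewrite Ha; exact: comm1l.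
  by rewrite Hy cj1; exact: comm1r.
split; first by apply/commutator1P; case: H => ->; [exact: comm1l | exact: comm1r].
split; [exact: C | split; [exact: C | by []]].
Qed.

Lemma ORL1_sound a B : Hold a \/ sys_eval e B -> sys_eval e (ORL1 a B).
Proof.
elim: B => [|b B IH] H; first exact: I.
apply/sys_cat; split.
  apply: ORt_sound; case: H; [by left | by case; right].
apply: IH; case: H; [by left | by case; right].
Qed.

Lemma ORL_sound A B : sys_eval e A \/ sys_eval e B -> sys_eval e (ORL A B).
Proof.
elim: A => [|a A IH] H; first exact: I.
apply/sys_cat; split.
  apply: ORL1_sound; case: H; [by case; left | by right].
apply: IH; case: H; [by case; left | by right].
Qed.

Hypothesis CT : CTprop G.
Hypothesis LL : Lprop G.
Hypothesis nuv : ~ comm (e (inr (inl true))) (e (inr (inl false))).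

Lemma ORt_complete a b : sys_eval e (ORt a b) -> Hold a \/ Hold b.
Proof.
rewrite /ORt /sys_eval /= => [[/commutator1P H1 [/commutator1P H2 [/commutator1P H3 _]]]].
exact: (OR_lemma CT LL nuv H1 H2 H3).
Qed.

Lemma ORL1_complete a B : sys_eval e (ORL1 a B) -> Hold a \/ sys_eval e B.
Proof.
elim: B => [|b B IH] H; first by right.
move/sys_cat: H => [/ORt_complete H1 /IH H2].
case: H1 => H1; first by left.
case: H2 => H2; first by left.
by right.
Qed.

Lemma ORL_complete A B : sys_eval e (ORL A B) -> sys_eval e A \/ sys_eval e B.
Proof.
elim: A => [|a A IH] H; first by left.
move/sys_cat: H => [/ORL1_complete H1 /IH H2].
case: H2 => H2; last by right.
case: H1 => H1; last by right.
by left.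
Qed.

End Sem.

Lemma D_sound (G : group) (e0 : Vp -> G) (e : Vt -> G) (He : forall w, e (emb w) = e0 w) f :
  qeval e0 f -> sys_eval e (D f).
Proof.
elim: f => [s t|f IHf g IHg|f IHf g IHg] /=.
- move=> H; rewrite /sys_eval /=; split=> //.
  rewrite !teval_tmap (teval_ext s He) (teval_ext t He) H; exact: gmulV'.
- by move=> [H1 H2]; apply/sys_cat; split; [exact: IHf | exact: IHg].
- by move=> H; apply: ORL_sound; case: H => H; [left; exact: IHf | right; exact: IHg].
Qed.

Lemma D_complete (G : group) (CT : CTprop G) (LL : Lprop G) (e0 : Vp -> G) (e : Vt -> G)
  (He : forall w, e (emb w) = e0 w)
  (nuv : ~ comm (e (inr (inl true))) (e (inr (inl false)))) f :
  sys_eval e (D f) -> qeval e0 f.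
Proof.
elim: f => [s t|f IHf g IHg|f IHf g IHg] /=.
- rewrite /sys_eval /= => [[H _]].
  rewrite !teval_tmap (teval_ext s He) (teval_ext t He) in H.
  by have := f_equal (@ginv G) (inv_uniq H); rewrite !ginvK => ->.
- by move/sys_cat => [H1 H2]; split; [exact: IHf | exact: IHg].
- move/(ORL_complete CT LL nuv) => [H|H]; [left; exact: IHf | right; exact: IHg].
Qed.

End Formula.

Lemma env_emb (G : group) (m r : nat) (z : 'I_m -> G) (u v : G) xs ys (w : phivar m r) :
  theta_env z u v xs ys (emb w) = phi_env z xs ys w.
Proof. by case: w => [i|[i|i]]. Qed.


End Main.
Import Main.


Theorem mainTheorem18 (m r : nat) (chi : qfpos (phivar m r)) :
  exists Sigma : seq (term (thetavar m r)),
    [/\ (* valid in every group *)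
        (forall (G : group) (z : 'I_m -> G) (u v : G),
            holds_phi chi z -> holds_theta Sigma z u v),
        (* in every non-abelian free group *)
        (forall F : group, nonabelian_free F ->
           forall (z : 'I_m -> F) (u v : F),
             commutator u v = gone F \/
             (holds_phi chi z <-> holds_theta Sigma z u v)) &
        (* in particular, for sentences *)
        (m = 0 ->
         nontrivial (fun G => forall z : 'I_m -> G, holds_phi chi z) ->
         nontrivial (fun G => forall (z : 'I_m -> G) (u v : G),
                                holds_theta Sigma z u v))].
Proof.
exists (D chi); split.
- move=> G z u v; apply: AE_mono => xs ys; apply: D_sound; exact: env_emb.
- move=> F HF z u v.
  case: (classic (commutator u v = gone F)) => H; [by left | right].
  have nuv : ~ comm u v by move/commutator1P.
  split; apply: AE_mono => xs ys.
    by apply: D_sound; exact: env_emb.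
  by apply: (D_complete (free_CT HF) (free_L HF) (env_emb z u v xs ys)).
- move=> _ [F [HF Hn]]; exists F; split=> // Hall; apply: Hn => z.
  have [u [v nuv]] := free_noncomm HF.
  apply: AE_mono (Hall z u v) => xs ys.
  by apply: (D_complete (free_CT HF) (free_L HF) (env_emb z u v xs ys)).
Qed.
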